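(* Let $\ell\ge2$. For $k=1,\dots,n$ let $(\mathcal F_k^{t_k})_{t_k\in\Omega_k}$ be a parametrized family of $C^1$ IFSs, each consisting of $\ell$ maps, on a compact $Z_k\subset\mathbb R^{q_k}$, satisfying the GTC with respect to a locally finite Borel measure $\eta_k$ on the metric space $(\Omega_k,d_{\Omega_k})$. Let $\Omega=\Omega_1\times\cdots\times\Omega_n$ with metric $d_\Omega((t_k)_k,(s_k)_k)=(\sum_kd_{\Omega_k}(t_k,s_k)^2)^{1/2}$, and for $\mathbf t=(t_1,\dots,t_n)\in\Omega$ let $\mathcal F^{\mathbf t}=\mathcal F_1^{t_1}\times\cdots\times\mathcal F_n^{t_n}$. Then the family $(\mathcal F^{\mathbf t})_{\mathbf t\in\Omega}$ satisfies the GTC with respect to $\eta_1\times\cdots\times\eta_n$.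
   Context: Direct product: if $\mathcal F_k=\{f_{i,k}\}_{i=1}^\ell$ is an IFS on $Z_k\subset\mathbb R^{q_k}$, then $\mathcal F_1\times\cdots\times\mathcal F_n=\{f_i\}_{i=1}^\ell$ on $Z_1\times\cdots\times Z_n\subset\mathbb R^{q_1+\dots+q_n}$ with $f_i(x_1,\dots,x_n)=(f_{i,1}(x_1),\dots,f_{i,n}(x_n))$. A $C^1$ IFS on compact $Z\subset\mathbb R^q$: maps $Z\to Z$ extending on an open $U\supset Z$ to $C^1$ diffeomorphisms into $U$ with $\sup_U\|Df_i\|<1$. $\Sigma=\{1,\dots,\ell\}^{\mathbb N}$; $f^t_{\bf i}=f^t_{i_1}\circ\cdots\circ f^t_{i_m}$ for ${\bf i}=i_1\cdots i_m$; coding map $\Pi^t({\bf i})=\lim_mf^t_{{\bf i}|m}(z)$; ${\bf i}\wedge{\bf j}$ the longest common initial word of distinct ${\bf i},{\bf j}$ and $|{\bf i}\wedge{\bf j}|$ its length. Singular value function: for integer $0\le p\le q$, $\phi^p(T)$ is the product of the $p$ largest singular values of $T\in\mathbb R^{q\times q}$. For a family on $Z\subset\mathbb R^q$, $Z^t_{\bf i}(r)=\inf_{x\in\Sigma}\min_{0\le p\le q}r^p/\phi^p(D_{\Pi^tx}f^t_{\bf i})$. GTC w.r.t. a locally finite Borel $\eta$ on a metric parameter space $\Omega$: there exist $\delta_0>0$ and $\psi:(0,\delta_0)\to[0,\infty)$ with $\psi(\delta)\to0$ such that for every $t_0\in\Omega$ and $0<\delta<\delta_0$ there is $C=C(t_0,\delta)>0$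 with $\eta\{t\in B(t_0,\delta):|\Pi^t({\bf i})-\Pi^t({\bf j})|<r\}\le Ce^{|{\bf i}\wedge{\bf j}|\psi(\delta)}Z^{t_0}_{{\bf i}\wedge{\bf j}}(r)$ for all distinct ${\bf i},{\bf j}\in\Sigma$, $r>0$ ($B$ the closed ball). *)

(* Defs.v *)
From HB Require Import structures.
From mathcomp Require Import all_boot all_order all_algebra.
From mathcomp Require Import all_classical all_reals.
From mathcomp Require Import ereal topology normedtype sequences derive exp measure.
Set Implicit Arguments. Unset Strict Implicit. Unset Printing Implicit Defensive.
Import Order.TTheory GRing.Theory Num.Theory.
Import numFieldNormedType.Exports.
Local Open Scope classical_set_scope.
Local Open Scope ring_scope.

Section Defs.
Variable R : realType.

Definition enorm (q : nat) (v : 'rV[R]_q) : R :=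
  Num.sqrt (\sum_(i < q) (v ord0 i) ^+ 2).

Definition opnorm (q : nat) (A : 'M[R]_q) : R :=
  sup [set enorm (v *m A) | v in [set v : 'rV[R]_q | enorm v <= 1]].

(* singular values of A: the decreasingly sorted nonnegative reals s_1>=..>=s_q
   whose squares are the eigenvalues (with multiplicity) of A^T A *)
Definition singular_values (q : nat) (A : 'M[R]_q) (s : seq R) : Prop :=
  [/\ size s = q, sorted (fun x y => y <= x) s, all (fun x => 0 <= x) s &
      char_poly (A^T *m A) = \prod_(x <- s) ('X - (x ^+ 2)%:P)].

Definition svf (q : nat) (p : nat) (A : 'M[R]_q) : R :=
  \prod_(i < p) (xget [::] (singular_values A)) `_ i.

Definition C1_on (q : nat) (U : set 'rV[R]_q) (f : 'rV[R]_q -> 'rV[R]_q) : Prop :=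
  forall x, U x -> differentiable f x /\ {for x, continuous (jacobian f)}.

Definition C1_diffeo_into (q : nat) (U : set 'rV[R]_q) (f : 'rV[R]_q -> 'rV[R]_q) :=
  [/\ C1_on U f, f @` U `<=` U, open (f @` U) &
      exists g, [/\ C1_on (f @` U) g, (forall x, U x -> g (f x) = x) &
                    (forall y, (f @` U) y -> f (g y) = y)]].

(* symbolic space Sigma = {1..l}^N, finite words are seq 'I_l *)
Definition prefix (l : nat) (i : nat -> 'I_l) (m : nat) : seq 'I_l := mkseq i m.

Definition wmap (l q : nat) (F : 'I_l -> 'rV[R]_q -> 'rV[R]_q) (w : seq 'I_l) :
  'rV[R]_q -> 'rV[R]_q := foldr (fun a g => F a \o g) id w.

(* a C^1 IFS {F i}_(i < l) on the compact set Z (nonempty); the last clause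
   says that the coding map  lim_m f_{i|m}(z)  is well defined, i.e. the limit
   exists and does not depend on z in Z *)
Definition C1_IFS (l q : nat) (Z : set 'rV[R]_q) (F : 'I_l -> 'rV[R]_q -> 'rV[R]_q) :=
  [/\ compact Z, Z !=set0, (forall i, F i @` Z `<=` Z),
      (exists U : set 'rV[R]_q, [/\ open U, Z `<=` U &
         forall i, C1_diffeo_into U (F i) /\
           exists c, c < 1 /\ forall x, U x -> opnorm (jacobian (F i) x) <= c]) &
      (forall i : nat -> 'I_l, exists p : 'rV[R]_q, forall z, Z z ->
          (fun m => wmap F (prefix i m) z) @ \oo --> p)].

Definition coding (l q : nat) (Z : set 'rV[R]_q) (F : 'I_l -> 'rV[R]_q -> 'rV[R]_q)
  (i : nat -> 'I_l) : 'rV[R]_q :=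
  lim ((fun m => wmap F (prefix i m) (xget 0 Z)) @ \oo).

Definition wedge_len (l : nat) (i j : nat -> 'I_l) : nat :=
  xget 0%N [set m | i m <> j m /\ forall k, (k < m)%N -> i k = j k].

Definition wedge (l : nat) (i j : nat -> 'I_l) : seq 'I_l := prefix i (wedge_len i j).

Definition Zsv (l q : nat) (Z : set 'rV[R]_q) (F : 'I_l -> 'rV[R]_q -> 'rV[R]_q)
  (w : seq 'I_l) (r : R) : R :=
  inf [set \big[Num.min/1]_(p < q.+1)
            (r ^+ p / svf p (jacobian (wmap F w) (coding Z F x)))
      | x in [set: nat -> 'I_l]].

Definition is_metric (T : Type) (d : T -> T -> R) : Prop :=
  [/\ forall x y, 0 <= d x y, forall x y, d x y = 0 <-> x = y,
      forall x y, d x y = d y x & forall x y z, d x z <= d x y + d y z].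

Definition dopen (T : Type) (d : T -> T -> R) (A : set T) : Prop :=
  forall x, A x -> exists e, 0 < e /\ [set y | d x y < e] `<=` A.

Definition borel (T : Type) (d : T -> T -> R) : set (set T) :=
  <<s [set A | dopen d A] >>.

Definition measure_on (T : Type) (M : set (set T)) (mu : set T -> \bar R) : Prop :=
  [/\ mu set0 = 0%E, (forall A, M A -> (0 <= mu A)%E) &
      forall F : nat -> set T, (forall k, M (F k)) -> trivIset setT F ->
        (fun m => (\sum_(0 <= k < m) mu (F k))%E) @ \oo --> mu (\bigcup_k F k)].

Definition loc_finite_borel (T : Type) (d : T -> T -> R) (mu : set T -> \bar R) :=
  measure_on (borel d) mu /\
  forall t, exists e : R, 0 < e /\ (mu [set y | (d t y < e)%R] < +oo)%E.

(* outer measure induced by mu on M (used to evaluate mu on arbitrary sets) *)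
Definition outer (T : Type) (M : set (set T)) (mu : set T -> \bar R) (A : set T) : \bar R :=
  ereal_inf [set mu B | B in [set B | M B /\ A `<=` B]].

Definition GTC (l q : nat) (T : Type) (d : T -> T -> R) (M : set (set T))
  (eta : set T -> \bar R) (Z : set 'rV[R]_q) (F : T -> 'I_l -> 'rV[R]_q -> 'rV[R]_q) :=
  exists delta0, 0 < delta0 /\ exists psi : R -> R,
    [/\ (forall x, 0 < x < delta0 -> 0 <= psi x),
        psi x @[x --> 0^'+] --> 0 &
        forall (t0 : T) (delta : R), 0 < delta < delta0 ->
          exists C : R, 0 < C /\
            forall i j : nat -> 'I_l, i <> j -> forall r : R, 0 < r ->
              (outer M eta [set t | (d t0 t <= delta)%R /\
                   (enorm (coding Z (F t) i - coding Z (F t) j) < r)%R]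
               <= (C * expR ((wedge_len i j)%:R * psi delta)
                     * Zsv Z (F t0) (wedge i j) r)%:E)%E].

Section Products.
Variables (n : nat) (Om : 'I_n -> Type).

Definition prod_dist (d : forall k, Om k -> Om k -> R) (t s : forall k, Om k) : R :=
  Num.sqrt (\sum_(k < n) (d k (t k) (s k)) ^+ 2).

Definition box (A : forall k, set (Om k)) : set (forall k, Om k) :=
  [set t | forall k, A k (t k)].

Definition prod_sigma (d : forall k, Om k -> Om k -> R) : set (set (forall k, Om k)) :=
  <<s [set box A | A in [set A : forall k, set (Om k) | forall k, borel (d k) (A k)]] >>.

Definition is_product_measure (d : forall k, Om k -> Om k -> R)
  (etas : forall k, set (Om k) -> \bar R) (eta : set (forall k, Om k) -> \bar R) :=
  measure_on (prod_sigma d) eta /\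
  forall A : forall k, set (Om k), (forall k, borel (d k) (A k)) ->
    eta (box A) = (\prod_(k < n) etas k (A k))%E.
End Products.

Section ProductIFS.
Variables (n : nat) (q : 'I_n -> nat).

Definition prodZ (Z : forall k, set 'rV[R]_(q k)) : set 'rV[R]_(\sum_(k < n) q k) :=
  [set x | forall k, Z k (submxrow x k)].

Definition prod_map (f : forall k, 'rV[R]_(q k) -> 'rV[R]_(q k))
  (x : 'rV[R]_(\sum_(k < n) q k)) : 'rV[R]_(\sum_(k < n) q k) :=
  \mxrow_(k < n) f k (submxrow x k).
End ProductIFS.

End Defs.

(* Main.v *)
Require Import Defs.
From HB Require Import structures.
From mathcomp Require Import all_boot all_order all_algebra.
From mathcomp Require Import all_classical all_reals.
From mathcomp Require Import ereal topology normedtype sequences derive exp measure.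
From mathcomp Require Import lra.
Set Implicit Arguments. Unset Strict Implicit. Unset Printing Implicit Defensive.
Import Order.TTheory GRing.Theory Num.Theory.
Import numFieldNormedType.Exports.
Local Open Scope classical_set_scope.
Local Open Scope ring_scope.

Section PB.
Variable R : realType.

Lemma char_poly_castmx m m' (e : m = m') (A : 'M[R]_m) :
  char_poly (castmx (e, e) A) = char_poly A.
Proof. by case: m' / e; rewrite castmx_id. Qed.

Lemma char_poly_block m1 m2 (A : 'M[R]_m1) (B : 'M[R]_m2) :
  char_poly (block_mx A 0 0 B) = char_poly A * char_poly B.
Proof.
rewrite /char_poly /char_poly_mx map_block_mx map_mx0 (scalar_mx_block m1 m2).
by rewrite opp_block_mx add_block_mx map_mx0 !subr0 det_ublock.
Qed.

Lemma char_poly_size0 m (A : 'M[R]_m) : m = 0%N -> char_poly A = 1.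
Proof. by move=> m0; subst m; rewrite /char_poly det_mx00. Qed.

Lemma char_poly_mxdiag p (p_ : 'I_p -> nat) (B : forall i, 'M[R]_(p_ i)) :
  char_poly (mxdiag B) = \prod_i char_poly (B i).
Proof.
elim: p p_ B => [|p IH] p_ B.
  rewrite [RHS]big_ord0; apply: char_poly_size0; exact: big_ord0.
rewrite mxdiag_recl char_poly_castmx char_poly_block IH big_ord_recl //.
Qed.

Lemma mxdiag_trmx_mul p (p_ : 'I_p -> nat) (A : forall i, 'M[R]_(p_ i)) :
  (mxdiag A)^T *m mxdiag A = mxdiag (fun i => (A i)^T *m A i).
Proof.
rewrite tr_mxdiag {2}/mxdiag mul_mxdiag_mxblock /mxdiag; apply/eq_mxblock => i j.
case: eqVneq => [->|]; rewrite ?mulmx0 // !conform_mx_id //.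
Qed.

End PB.

Section SV.
Variable R : realType.
Local Notation ge := (fun x y : R => y <= x).

Lemma sv_unique q (A : 'M[R]_q) s t :
  singular_values A s -> singular_values A t -> s = t.
Proof.
case=> _ ss /allP s0 cs [_ st /allP t0 ct].
have ge_tr : transitive ge by move=> x y z /= h1 h2; exact: le_trans h2 h1.
have ge_as : antisymmetric ge by move=> x y /andP[h1 h2]; apply/le_anti/andP.
apply: (sorted_eq ge_tr ge_as) => //.
have : perm_eq (map (fun x => x ^+ 2) s) (map (fun x => x ^+ 2) t).
  by apply: prod_XsubC_eq; rewrite !big_map -cs -ct.
move/(perm_map Num.sqrt); rewrite -!map_comp.
have E u : {in u, forall x : R, 0 <= x} -> map (Num.sqrt \o (fun x => x ^+ 2)) u = u.
  move=> u0; rewrite -[RHS]map_id; apply/eq_in_map => x /u0 x0 /=.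
  by rewrite sqrtr_sqr ger0_norm.
by rewrite !E.
Qed.

Definition svcat p (s : 'I_p -> seq R) : seq R :=
  sort ge (flatten [seq s k | k <- enum 'I_p]).

Lemma sv_mxdiag p (p_ : 'I_p -> nat) (A : forall i, 'M[R]_(p_ i)) s :
  (forall k, singular_values (A k) (s k)) -> singular_values (mxdiag A) (svcat s).
Proof.
move=> hs; have PS u : perm_eq (sort ge u) u by rewrite perm_sort.
split.
- rewrite size_sort size_flatten /shape -map_comp sumnE big_map big_enum /=.
  by apply: eq_bigr => k _; have [] := hs k.
- by apply: sort_sorted => x y; exact: le_total.
- rewrite (perm_all _ (PS _)); apply/allP => x /flattenP [u /mapP[k _ ->]].
  by have [_ _ /allP h _] := hs k; exact: h.
- rewrite mxdiag_trmx_mul char_poly_mxdiag (perm_big _ (PS _)) /=.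
  rewrite big_flatten big_map big_enum /=; apply: eq_bigr => k _.
  by have [] := hs k.
Qed.

Definition term (r : R) (s : seq R) (p : nat) := r ^+ p / \prod_(i < p) s`_i.
Definition gfun (r : R) (s : seq R) := \prod_(x <- s) Num.min 1 (r / x).

Lemma term_prod r s p : term r s p = \prod_(0 <= i < p) (r / s`_i).
Proof.
by rewrite /term big_split /= prodfV prodr_const_nat subn0 big_mkord.
Qed.

Lemma gfun_nth r s : gfun r s = \prod_(0 <= i < size s) Num.min 1 (r / s`_i).
Proof. by rewrite /gfun (big_nth 0). Qed.

Lemma minfac_ge0 (r x : R) : 0 <= r -> 0 <= x -> 0 <= Num.min 1 (r / x) <= 1.
Proof. by move=> r0 x0; rewrite le_min ler01 divr_ge0 //= ge_min lexx. Qed.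

Lemma gfun_ge0 r s : 0 <= r -> all (fun x => 0 <= x) s -> 0 <= gfun r s.
Proof.
move=> r0 /allP s0; rewrite /gfun big_seq; apply: prodr_ge0 => x /s0 x0.
by have /andP[] := minfac_ge0 r0 x0.
Qed.

Lemma nth_ge0 (s : seq R) i : all (fun x => 0 <= x) s -> 0 <= s`_i.
Proof.
move=> /allP s0; case: (ltnP i (size s)) => h; first by apply: s0; exact: mem_nth.
by rewrite nth_default.
Qed.

Lemma gfun_le_term r s p : 0 <= r -> all (fun x => 0 <= x) s -> (p <= size s)%N ->
  gfun r s <= term r s p.
Proof.
move=> r0 s0 ps; rewrite gfun_nth term_prod (big_cat_nat (leq0n p) ps) /=.
have hm i : 0 <= Num.min 1 (r / s`_i) <= 1 by apply: minfac_ge0 => //; exact: nth_ge0.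
rewrite -[X in _ <= X]mulr1; apply: ler_pM.
- by apply: prodr_ge0 => i _; have /andP[] := hm i.
- by apply: prodr_ge0 => i _; have /andP[] := hm i.
- apply: ler_prod => i _; have /andP[-> _] := hm i; by rewrite ge_min lexx orbT.
- exact: prodr_ile1.
Qed.

Lemma gfun_le_min r s q : 0 <= r -> all (fun x => 0 <= x) s -> size s = q ->
  gfun r s <= \big[Num.min/1]_(p < q.+1) term r s p.
Proof.
move=> r0 s0 sq; apply: le_bigmin.
  rewrite /gfun big_seq; apply: prodr_ile1 => x xs; apply: minfac_ge0 => //.
  exact: (allP s0).
move=> p _; apply: gfun_le_term => //; rewrite sq; exact: (ltn_ord p).
Qed.

Lemma min_le_gfun r s q : 0 < r -> sorted ge s -> all (fun x => 0 <= x) s -> size s = q ->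
  \big[Num.min/1]_(p < q.+1) term r s p <= gfun r s.
Proof.
move=> r0 ss s0 sq.
have ge_tr : transitive ge by move=> x y z /= h1 h2; exact: le_trans h2 h1.
case: (boolP (0 \in s)) => [zs | zs].
  apply: (le_trans (bigmin_le _ ord_max _)); rewrite /term.
  have hi : (index (0:R)%R s < q)%N by rewrite -sq index_mem.
  rewrite (bigD1 (Ordinal hi)) //= nth_index // mul0r invr0 mulr0.
  exact: gfun_ge0 (ltW r0) s0.
set p0 := find (fun x => x <= r) s.
have p0s : (p0 <= size s)%N by exact: find_size.
have hp0 : (p0 < q.+1)%N by rewrite ltnS -sq.
apply: (le_trans (bigmin_le _ (Ordinal hp0) _)) => /=.
have pos i : (i < size s)%N -> 0 < s`_i.
  move=> h; rewrite lt_def (allP s0) ?mem_nth // andbT.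
  by apply: contraNneq zs => <-; exact: mem_nth.
rewrite gfun_nth term_prod (big_cat_nat (leq0n p0) p0s) /=.
have -> : \prod_(p0 <= i < size s) Num.min 1 (r / s`_i) = 1.
  rewrite big_nat_cond big1 // => i /andP[/andP[pi iz] _].
  have hs : has (fun x => x <= r) s by rewrite has_find; exact: (leq_ltn_trans pi).
  have h1 : s`_p0 <= r := nth_find 0 hs.
  have h2 : s`_i <= s`_p0.
    by apply: (sorted_leq_nth ge_tr (fun x => lexx x) 0 ss) => //; rewrite inE //; exact: (leq_ltn_trans pi).
  apply: min_l; rewrite ler_pdivlMr ?pos // mul1r; exact: le_trans h2 h1.
rewrite mulr1 le_eqVlt; apply/orP; left; apply/eqP/eq_big_nat => i /andP[_ ip]; apply/esym/min_r.
have := before_find 0 ip; rewrite -/p0 => /negbT; rewrite -ltNge => ri.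
have iz : (i < size s)%N by exact: (leq_trans ip).
by rewrite ler_pdivrMr ?pos // mul1r; exact: ltW.
Qed.


Definition SV m (A : 'M[R]_m) := xget [::] (singular_values A).
Definition fmin (r : R) m (A : 'M[R]_m) := \big[Num.min/1]_(p < m.+1) (r ^+ p / svf p A).

Lemma fminE r m (A : 'M[R]_m) : fmin r A = \big[Num.min/1]_(p < m.+1) term r (SV A) p.
Proof. by []. Qed.

Lemma SV_ge0 m (A : 'M[R]_m) : all (fun x => 0 <= x) (SV A).
Proof. by rewrite /SV; case: xgetP => // s _ [_ _ ->]. Qed.

Lemma fmin_ge0 r m (A : 'M[R]_m) : 0 <= r -> 0 <= fmin r A.
Proof.
move=> r0; rewrite fminE; apply: le_bigmin => // p _.
rewrite /term divr_ge0 ?exprn_ge0 //; apply: prodr_ge0 => i _; exact: nth_ge0 (SV_ge0 A).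
Qed.

Lemma fmin_SV r m (A : 'M[R]_m) s : 0 < r -> singular_values A s -> fmin r A = gfun r s.
Proof.
move=> r0 hs; have e : SV A = s.
  apply: sv_unique (hs); apply: xgetPex; by exists s.
have [sz ss s0 _] := hs.
rewrite fminE e; apply/le_anti/andP; split; first exact: min_le_gfun.
exact: gfun_le_min (ltW r0) s0 sz.
Qed.

Lemma fmin_noSV r m (A : 'M[R]_m) : 0 < r -> ~ (exists s, singular_values A s) -> fmin r A = 0.
Proof.
move=> r0 hn; have e : SV A = [::].
  by apply: xgetPN => s hs; apply: hn; exists s.
case: m A hn e => [|m] A hn e.
  exfalso; apply: hn; exists [::]; split => //.
  by rewrite big_nil /char_poly det_mx00.
apply/le_anti/andP; split; last exact: fmin_ge0 (ltW r0).
rewrite fminE e; have h1 : (1 < m.+2)%N by [].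
apply: (le_trans (bigmin_le _ (Ordinal h1) _)).
by rewrite /term /= big_ord1 nth_nil invr0 mulr0.
Qed.

Lemma gfun_svcat r p (s : 'I_p -> seq R) : gfun r (svcat s) = \prod_k gfun r (s k).
Proof.
have PS u : perm_eq (sort ge u) u by rewrite perm_sort.
by rewrite /gfun /svcat (perm_big _ (PS _)) big_flatten big_map big_enum.
Qed.

Lemma fmin_mxdiag p (p_ : 'I_p -> nat) (A : forall i, 'M[R]_(p_ i)) r :
  0 < r -> \prod_i fmin r (A i) <= fmin r (mxdiag A).
Proof.
move=> r0; case: (pselect (forall k, exists s, singular_values (A k) s)) => [h|h].
  have [s hs] := boolp.choice h.
  rewrite (fmin_SV r0 (sv_mxdiag hs)) gfun_svcat; apply: ler_prod => k _.
  by rewrite fmin_ge0 ?(ltW r0) //= (fmin_SV r0 (hs k)).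
have [k hk] : exists k, ~ exists s, singular_values (A k) s.
  by apply: contra_notP h => hn k; apply: contra_notP (hn) => hk; exfalso; apply: hn; exists k.
rewrite (bigD1 k) //= fmin_noSV // mul0r; exact: fmin_ge0 (ltW r0).
Qed.

End SV.

Section PA0.
Variable R : realType.

Lemma mx_cont_coord (T : topologicalType) m n (f : T -> 'M[R]_(m, n)) x :
  (forall i j, {for x, continuous (fun y => f y i j)}) -> {for x, continuous f}.
Proof.
move=> h A /= /nbhs_ballP [e e0 eA].
have H : \forall y \near x, forall i j, `|f x i j - f y i j| < e.
  apply: filter_forall => i; apply: filter_forall => j.
  by have /cvgrPdist_lt := h i j; apply.
apply: filterS H => y hy; apply: eA; split => // i j; exact: hy.
Qed.

Lemma mulmx_cont m a b (A : 'M[R]_(a, b)) : continuous (fun x : 'M[R]_(m, a) => x *m A).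
Proof.
move=> x; apply: mx_cont_coord => i j.
under [X in {for _, continuous X}]eq_fun do rewrite mxE.
apply: (@continuous_big _ _ +%R 0 xpredT) => //.
  exact: add_continuous.
move=> k _ y; exact: (continuous_comp (@coord_continuous R _ _ i k y) (@mulrr_continuous R (A k j) _)).
Qed.

End PA0.

Section PA.
Variables (R : realType) (n : nat) (q : 'I_n -> nat).
Local Notation Q := (\sum_(k < n) q k)%N.

Definition Pm k : 'M[R]_(Q, q k) := submxrow (1%:M : 'M[R]_Q) k.
Definition Em k : 'M[R]_(q k, Q) := submxcol (1%:M : 'M[R]_Q) k.

Lemma submxrowE (x : 'rV[R]_Q) k : submxrow x k = x *m Pm k.
Proof. by rewrite /Pm mul_submxrow mulmx1. Qed.

Lemma mxrowE (y : forall k, 'rV[R]_(q k)) : \mxrow_k y k = \sum_k y k *m Em k.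
Proof. by rewrite -[LHS]mulmx1 -[X in _ *m X](submxcolK (1%:M : 'M[R]_Q)) mul_mxrow_mxcol. Qed.

Lemma lin_diff a b (B : 'M[R]_(a, b)) (x : 'rV[R]_a) :
  differentiable (mulmxr B) x /\ 'd (mulmxr B) x = mulmxr B :> ('rV[R]_a -> 'rV[R]_b).
Proof.
split; first by apply: linear_differentiable; exact: mulmx_cont.
by apply: diff_lin; exact: mulmx_cont.
Qed.

Lemma prod_map_diff (g : forall k, 'rV[R]_(q k) -> 'rV[R]_(q k)) (x : 'rV[R]_Q) :
  (forall k, differentiable (g k) (submxrow x k)) ->
  differentiable (prod_map g) x /\
  jacobian (prod_map g) x = mxdiag (fun k => jacobian (g k) (submxrow x k)).
Proof.
move=> dg.
pose h k := (mulmxr (Em k)) \o ((g k) \o (mulmxr (Pm k))).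
have hE : prod_map g = \sum_k h k.
  apply/funext => y; rewrite fct_sumE /prod_map mxrowE; apply: eq_bigr => k _.
  by rewrite /h /= submxrowE.
have dh k : differentiable (h k) x.
  have [d1 _] := lin_diff (Pm k) x.
  have [d2 _] := lin_diff (Em k) (g k (x *m Pm k)).
  apply: differentiable_comp => //; apply: differentiable_comp => //.
  by rewrite /= -submxrowE.
have dP : differentiable (prod_map g) x by rewrite hE; exact: differentiable_sum.
split => //; apply/row_matrixP => i; rewrite !rowE.
set v := 'e_i.
rewrite -deriveEjacobian // hE derive_sum; last by move=> k; exact: diff_derivable.
rewrite -{2}(submxrowK v) mul_mxrow_mxdiag mxrowE; apply: eq_bigr => k _.
rewrite deriveE // /h.
have [d1 e1] := lin_diff (Pm k) x.
have [d2 e2] := lin_diff (Em k) (g k (x *m Pm k)).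
have dgk : differentiable (g k) (mulmxr (Pm k) x) by rewrite /= -submxrowE.
rewrite diff_comp //; last exact: differentiable_comp.
rewrite diff_comp // /= e1 e2 /= -submxrowE -mul_rV_lin1 -submxrowE //.
Qed.

Lemma wmap_prod l (G : forall k, 'I_l -> 'rV[R]_(q k) -> 'rV[R]_(q k)) w :
  wmap (fun i => prod_map (fun k => G k i)) w = prod_map (fun k => wmap (G k) w).
Proof.
elim: w => [|a w IH] /=; apply/funext => y.
  by rewrite /prod_map /= submxrowK.
by rewrite IH /prod_map /=; apply/eq_mxrow => k; rewrite mxrowK.
Qed.

End PA.

Section PA2.
Variables (R : realType) (l q : nat) (Z : set 'rV[R]_q) (G : 'I_l -> 'rV[R]_q -> 'rV[R]_q).
Hypothesis hG : C1_IFS Z G.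

Lemma wmap_in w z : Z z -> Z (wmap G w z).
Proof.
have [_ _ inv _ _] := hG.
elim: w => [|a w IH] //= Zz; apply: (inv a); exists (wmap G w z) => //; exact: IH.
Qed.

Lemma wmap_diff w z : Z z -> differentiable (wmap G w) z.
Proof.
have [_ _ _ [U [_ ZU hU]] _] := hG.
elim: w => [|a w IH] /= Zz; first exact: ex_diff.
apply: differentiable_comp; first exact: IH.
have [[C1 _ _ _] _] := hU a; have [] := C1 _ (ZU _ (wmap_in w Zz)); done.
Qed.

Lemma coding_cvg i z : Z z ->
  (fun m => wmap G (Defs.prefix i m) z) @ \oo --> coding Z G i.
Proof.
have [_ Z0 _ _ hc] := hG; have [p hp] := hc i.
have Zx : Z (xget 0 Z) by apply: xgetPex.
have -> : coding Z G i = p.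
  rewrite /coding; apply: cvg_lim; first exact: norm_hausdorff. exact: hp.
by move=> Zz; exact: hp.
Qed.

Lemma coding_in i : Z (coding Z G i).
Proof.
have [cZ Z0 _ _ _] := hG.
have Zx : Z (xget 0 Z) by apply: xgetPex.
apply: (closed_cvg Z _ _ _ (@coding_cvg i _ Zx)).
  exact: compact_closed (@norm_hausdorff _ _) cZ.
by apply: nearW => m; exact: wmap_in.
Qed.

End PA2.

Section PA3.
Local Unset Implicit Arguments.
Variables (R : realType) (l n : nat) (q : 'I_n -> nat).
Variables (Z : forall k, set 'rV[R]_(q k)) (G : forall k, 'I_l -> 'rV[R]_(q k) -> 'rV[R]_(q k)).
Hypothesis hG : forall k : 'I_n, C1_IFS (Z k) (G k).
Local Notation Gp := (fun i => prod_map (fun k => G k i)).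

Lemma prodZ_x : prodZ Z (xget 0 (prodZ Z)).
Proof.
apply: xgetPex; exists (\mxrow_k xget 0 (Z k)); rewrite /prodZ /= => k; rewrite mxrowK.
by have [_ Z0 _ _ _] := hG k; apply: xgetPex.
Qed.

Lemma coding_prod i : coding (prodZ Z) Gp i = \mxrow_k coding (Z k) (G k) i.
Proof.
rewrite {1}/coding; apply: cvg_lim; first exact: norm_hausdorff.
set z0 := xget 0 (prodZ Z).
have E : (fun m => wmap Gp (Defs.prefix i m) z0) =
   (fun m => \sum_k (wmap (G k) (Defs.prefix i m) (submxrow z0 k)) *m @Em R n q k).
  by apply/funext => m; rewrite wmap_prod /prod_map mxrowE.
rewrite E mxrowE.
apply: (@cvg_big _ _ +%R 0 xpredT add_continuous) => // k _.
have h1 := @coding_cvg R l (q k) (Z k) (G k) (hG k) i (submxrow z0 k) (prodZ_x k).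
have h2 := (continuous_cvg _ (@mulmx_cont R 1 _ _ (@Em R n q k) _) h1).
exact: h2.
Qed.

End PA3.

Section PA4.
Local Unset Implicit Arguments.
Variables (R : realType) (l n : nat) (q : 'I_n -> nat).
Variables (Z : forall k, set 'rV[R]_(q k)) (G : forall k, 'I_l -> 'rV[R]_(q k) -> 'rV[R]_(q k)).
Hypothesis hG : forall k : 'I_n, C1_IFS (Z k) (G k).
Local Notation Gp := (fun i => prod_map (fun k => G k i)).

Lemma fmin_prod w r x : 0 < r ->
  \prod_k fmin r (jacobian (wmap (G k) w) (coding (Z k) (G k) x))
  <= fmin r (jacobian (wmap Gp w) (coding (prodZ Z) Gp x)).
Proof.
move=> r0; rewrite wmap_prod coding_prod //.
have dd : forall k, differentiable (wmap (G k) w) (submxrow (\mxrow_k coding (Z k) (G k) x) k).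
  by move=> k; rewrite mxrowK; apply: wmap_diff => //; apply: coding_in.
have [_ ->] := prod_map_diff dd.
by under eq_mxdiag do rewrite mxrowK; exact: fmin_mxdiag.
Qed.

Lemma Zsv_ge0 m (Y : set 'rV[R]_m) (H : 'I_l -> 'rV[R]_m -> 'rV[R]_m) w r :
  (0 < l)%N -> 0 < r -> 0 <= Zsv Y H w r.
Proof.
move=> l0 r0; apply: lb_le_inf.
  by exists (fmin r (jacobian (wmap H w) (coding Y H (fun=> Ordinal l0)))), (fun=> Ordinal l0).
by move=> _ [x _ <-]; exact: (fmin_ge0 _ (ltW r0)).
Qed.

Lemma Zsv_le m (Y : set 'rV[R]_m) (H : 'I_l -> 'rV[R]_m -> 'rV[R]_m) w r x :
  0 < r -> Zsv Y H w r <= fmin r (jacobian (wmap H w) (coding Y H x)).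
Proof.
move=> r0; apply: ge_inf; last by exists x.
by exists 0 => _ [y _ <-]; exact: (fmin_ge0 _ (ltW r0)).
Qed.

Lemma Zsv_prod w r : (0 < l)%N -> 0 < r ->
  \prod_k Zsv (Z k) (G k) w r <= Zsv (prodZ Z) Gp w r.
Proof.
move=> l0 r0; apply: lb_le_inf.
  by exists (fmin r (jacobian (wmap Gp w) (coding (prodZ Z) Gp (fun=> Ordinal l0)))), (fun=> Ordinal l0).
move=> _ [x _ <-]; apply: le_trans (fmin_prod w r x r0).
apply: ler_prod => k _; rewrite Zsv_ge0 //=; exact: Zsv_le.
Qed.

End PA4.

Section PD0.
Variable R : realType.

Lemma prod_eps n (b : 'I_n -> R) e : (forall k, 0 <= b k) -> 0 <= e <= 1 ->
  \prod_k (b k + e) <= \prod_k b k + e * \prod_k (b k + 2).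
Proof.
elim: n b => [|n IH] b b0 /andP[e0 e1].
  by rewrite !big_ord0 mulr1 lerDl.
rewrite !big_ord_recl.
set P := \prod_(i < n) b (lift ord0 i).
set M := \prod_(i < n) (b (lift ord0 i) + 2).
set P' := \prod_(i < n) (b (lift ord0 i) + e).
have hP' : P' <= P + e * M by apply: (IH (fun i => b (lift ord0 i))) => [k|]; [exact: b0 | rewrite e0 e1].
have P0 : 0 <= P by apply: prodr_ge0 => k _; exact: b0.
have PM : P <= M by apply: ler_prod => k _; rewrite b0 /= lerDl.
have P'0 : 0 <= P' by apply: prodr_ge0 => k _; rewrite addr_ge0 // b0.
have := b0 ord0; set c := b ord0 => c0.
have h1 : (c + e) * P' <= (c + e) * (P + e * M) by rewrite ler_wpM2l // addr_ge0.
apply: le_trans h1 _.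
have M0 : 0 <= M by exact: le_trans PM.
have h2 : e * (e * M) <= e * M by rewrite ler_wpM2l // ler_piMl.
have h3 : e * P <= e * M by rewrite ler_wpM2l.
nra.
Qed.

End PD0.

Section PD1.
Local Unset Implicit Arguments.
Variables (R : realType) (n : nat) (Om : 'I_n -> Type).
Variables (d : forall k, Om k -> Om k -> R) (eta : forall k, set (Om k) -> \bar R).
Variable (etaP : set (forall k, Om k) -> \bar R).
Hypothesis hP : is_product_measure d eta etaP.
Hypothesis heta : forall k, measure_on (borel (d k)) (eta k).

Lemma outer_prod_key (S : forall k, set (Om k)) (b : 'I_n -> R) e :
  0 < e -> (forall k, 0 <= b k) ->
  (forall k, (outer (borel (d k)) (eta k) (S k) <= (b k)%:E)%E) ->
  (outer (prod_sigma d) etaP (box S) <= (\prod_k (b k + e))%:E)%E.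
Proof.
move=> e0 b0 hS.
have hk k : exists B : set (Om k),
    [/\ borel (d k) B, S k `<=` B & (eta k B < (b k + e)%:E)%E].
  have : (outer (borel (d k)) (eta k) (S k) < (b k + e)%:E)%E.
    by apply: le_lt_trans (hS k) _; rewrite lte_fin ltrDl.
  by move/ereal_inf_lt => [_ [B [mB sB] <-] lt]; exists B.
pose B k := sval (cid (hk k)).
have hB k : [/\ borel (d k) (B k), S k `<=` B k & (eta k (B k) < (b k + e)%:E)%E].
  exact: svalP (cid (hk k)).
apply: (@le_trans _ _ (etaP (box B))).
  apply: ereal_inf_lbound; exists (box B) => //; split.
    apply: sub_gen_smallest; exists B => //; by move=> k; case: (hB k).
  move=> t St k; case: (hB k) => _ sB _; exact: sB _ (St k).
case: hP => _ ->; last by move=> k; case: (hB k).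
have g0 k : (0 <= eta k (B k))%E by have [_ h _] := heta k; apply: h; case: (hB k).
have fin k : eta k (B k) = (fine (eta k (B k)))%:E.
  rewrite fineK // ge0_fin_numE //; case: (hB k) => _ _ h; apply: lt_le_trans h _.
  by rewrite leey.
rewrite (eq_bigr _ (fun k _ => fin k)) prodEFin lee_fin; apply: ler_prod => k _.
apply/andP; split; first by rewrite fine_ge0.
by case: (hB k) => _ _; rewrite {1}fin lte_fin => /ltW.
Qed.

Lemma outer_prod_le (S : forall k, set (Om k)) (b : 'I_n -> R) :
  (forall k, 0 <= b k) ->
  (forall k, (outer (borel (d k)) (eta k) (S k) <= (b k)%:E)%E) ->
  (outer (prod_sigma d) etaP (box S) <= (\prod_k b k)%:E)%E.
Proof.
move=> b0 hS; set M := \prod_k (b k + 2).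
have M0 : 0 < M by apply: prodr_gt0 => k _; rewrite ltr_wpDl.
have key e : 0 < e -> e <= 1 ->
    (outer (prod_sigma d) etaP (box S) <= (\prod_k b k + e * M)%:E)%E.
  move=> e0 e1; apply: le_trans (outer_prod_key S b e e0 b0 hS) _.
  by rewrite lee_fin; apply: prod_eps => //; rewrite (ltW e0).
case Eo: (outer (prod_sigma d) etaP (box S)) => [x| |].
- rewrite lee_fin; apply/ler_addgt0Pr => e e0.
  set t := Num.min 1 (e / M).
  have t0 : 0 < t by rewrite lt_min ltr01 divr_gt0.
  have t1 : t <= 1 by rewrite ge_min lexx.
  have := key t t0 t1; rewrite Eo lee_fin => h; apply: le_trans h _.
  rewrite lerD2l -ler_pdivlMr //; by rewrite ge_min lexx orbT.
- by have := key 1 ltr01 (lexx _); rewrite Eo leye_eq.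
- by rewrite leNye.
Qed.

End PD1.

Section PD2.
Local Unset Implicit Arguments.
Variable R : realType.

Lemma enorm_mxrow n (q : 'I_n -> nat) (y : forall k, 'rV[R]_(q k)) k :
  enorm (y k) <= enorm (\mxrow_k y k).
Proof.
rewrite /enorm ler_sqrt; last by apply: sumr_ge0 => i _; exact: sqr_ge0.
have -> : \sum_(i < \sum_(k < n) q k) ((\mxrow_k y k) ord0 i) ^+ 2 =
    \sum_k \sum_(j < q k) (y k ord0 j) ^+ 2.
  rewrite sig_big_dep /= (reindex _ tagnat.sig_bij_on) /=.
  by apply: eq_bigr => s _; rewrite mxE.
rewrite (bigD1 k) //= lerDl; apply: sumr_ge0 => i _; apply: sumr_ge0 => j _.
exact: sqr_ge0.
Qed.

Lemma prod_dist_ge n (Om : 'I_n -> Type) (d : forall k, Om k -> Om k -> R) t s k :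
  d k (t k) (s k) <= prod_dist d t s.
Proof.
rewrite /prod_dist; apply: le_trans (ler_norm _) _.
rewrite -sqrtr_sqr ler_sqrt; last by apply: sumr_ge0 => i _; exact: sqr_ge0.
rewrite (bigD1 k) //= lerDl; apply: sumr_ge0 => i _; exact: sqr_ge0.
Qed.

End PD2.

Theorem proposition6p1 (R : realType) (l n : nat) (q : 'I_n -> nat)
  (Om : 'I_n -> Type) (d : forall k, Om k -> Om k -> R)
  (eta : forall k, set (Om k) -> \bar R)
  (Z : forall k, set 'rV[R]_(q k))
  (F : forall k, Om k -> 'I_l -> 'rV[R]_(q k) -> 'rV[R]_(q k))
  (etaP : set (forall k, Om k) -> \bar R) :
  (2 <= l)%N ->
  (forall k, is_metric (d k)) ->
  (forall k, loc_finite_borel (d k) (eta k)) ->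
  (forall k (t : Om k), C1_IFS (Z k) (F k t)) ->
  (forall k, GTC (d k) (borel (d k)) (eta k) (Z k) (F k)) ->
  is_product_measure d eta etaP ->
  GTC (prod_dist d) (prod_sigma d) etaP (prodZ Z)
      (fun (t : forall k, Om k) (i : 'I_l) => prod_map (fun k => F k (t k) i)).
Proof.
move=> l2 _ hloc hC1 hGTC hP.
have l0 : (0 < l)%N by apply: leq_trans l2.
have heta k : measure_on (borel (d k)) (eta k) by case: (hloc k).
have hG' (k : 'I_n) : exists dp : R * (R -> R), 0 < dp.1 /\
    [/\ (forall x, 0 < x < dp.1 -> 0 <= dp.2 x), dp.2 x @[x --> (0:R)^'+] --> 0 &
        forall (t0 : Om k) (delta : R), 0 < delta < dp.1 ->
          exists C : R, 0 < C /\
            forall i j : nat -> 'I_l, i <> j -> forall r : R, 0 < r ->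
              (outer (borel (d k)) (eta k) [set t | (d k t0 t <= delta)%R /\
                   (enorm (coding (Z k) (F k t) i - coding (Z k) (F k t) j) < r)%R]
               <= (C * expR ((wedge_len i j)%:R * dp.2 delta)
                     * Zsv (Z k) (F k t0) (wedge i j) r)%:E)%E].
  by have [d0 [d0p [psi hpsi]]] := hGTC k; exists (d0, psi).
have [dp hdp] := boolp.choice hG'.
exists (\big[Num.min/1]_k (dp k).1); split.
  by apply: lt_bigmin => // k _; case: (hdp k).
exists (fun x => \sum_k (dp k).2 x); split.
- move=> x /andP[x0 xD]; apply: sumr_ge0 => k _.
  have [_ [h _ _]] := hdp k; apply: h; rewrite x0 /=.
  exact: lt_le_trans xD (bigmin_le _ _ _).
- have hl k : (dp k).2 x @[x --> (0:R)^'+] --> 0 by case: (hdp k) => _ [].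
  have h := @cvg_big R 'I_n +%R 0 xpredT add_continuous R _ (index_enum 'I_n)
    (fun k x => (dp k).2 x) (fun=> 0) _ (fun k _ => hl k).
  rewrite big1 // in h; apply: h.
- move=> t0 delta /andP[dl0 dlD].
  have hCk (k : 'I_n) : exists C : R, 0 < C /\
            forall i j : nat -> 'I_l, i <> j -> forall r : R, 0 < r ->
              (outer (borel (d k)) (eta k) [set t | (d k (t0 k) t <= delta)%R /\
                   (enorm (coding (Z k) (F k t) i - coding (Z k) (F k t) j) < r)%R]
               <= (C * expR ((wedge_len i j)%:R * (dp k).2 delta)
                     * Zsv (Z k) (F k (t0 k)) (wedge i j) r)%:E)%E.
    have [_ [_ _ h]] := hdp k; apply: h; rewrite dl0 /=.
    exact: lt_le_trans dlD (bigmin_le _ _ _).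
  have [C hC] := boolp.choice hCk.
  exists (\prod_k C k); split; first by apply: prodr_gt0 => k _; case: (hC k).
  move=> i j ij r r0.
  pose S k := [set t | (d k (t0 k) t <= delta)%R /\
       (enorm (coding (Z k) (F k t) i - coding (Z k) (F k t) j) < r)%R].
  pose b k := C k * expR ((wedge_len i j)%:R * (dp k).2 delta)
                     * Zsv (Z k) (F k (t0 k)) (wedge i j) r.
  have b0 k : 0 <= b k.
    rewrite /b mulr_ge0 ?Zsv_ge0 // mulr_ge0 ?expR_ge0 //.
    by case: (hC k) => /ltW.
  have sub : [set t | (prod_dist d t0 t <= delta)%R /\
       (enorm (coding (prodZ Z) (fun i => prod_map (fun k => F k (t k) i)) i -
               coding (prodZ Z) (fun i => prod_map (fun k => F k (t k) i)) j) < r)%R]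
       `<=` box S.
    move=> t [h1 h2] k; split; first exact: le_trans (prod_dist_ge _ _ _ d t0 t k) h1.
    apply: le_lt_trans h2.
    rewrite !(coding_prod _ _ _ _ _ _ (fun k => hC1 k (t k))) -mxrowB.
    exact: (enorm_mxrow _ _ _ (fun k => coding (Z k) (F k (t k)) i - coding (Z k) (F k (t k)) j)).
  apply: le_trans (le_trans _ (outer_prod_le _ _ _ _ _ _ hP heta S b b0 (fun k => (hC k).2 i j ij r r0))) _.
    rewrite /outer; apply: le_ereal_inf => _ [X [mX sX] <-]; exists X => //; split => //.
    exact: subset_trans sub sX.
  rewrite lee_fin /b !big_split /= mulr_sumr expR_sum.
  apply: ler_wpM2l.
    apply: mulr_ge0; first by apply: prodr_ge0 => k _; case: (hC k) => /ltW.
    by apply: prodr_ge0 => k _; exact: expR_ge0.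
  exact: (Zsv_prod _ _ _ _ _ _ (fun k => hC1 k (t0 k))).
Qed.
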